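(* Let $T$ be a tree and let $v\in V(T)$. Then there exists a constant $C=C(T)$ with the following property. Let $n$ be a positive integer and let $G$ be a bipartite graph with parts $X$ and $Y$, each of size at most $n$, such that $G$ contains at least $Cn^2$ copies of $K_{2,2}$. Then $G$ contains a copy of $T[2]$ in which the two vertices corresponding to $v$ are embedded in $X$.
   Context: For a graph $F$, the $2$-blowup $F[2]$ is obtained by replacing each vertex $u$ of $F$ by an independent set of two vertices (the two images of $u$) and each edge by a copy of $K_{2,2}$ between the corresponding sets. A copy of $K_{2,2}$ means a subgraph of $G$ isomorphic to $K_{2,2}$. *)

(* Defs.v *)
From mathcomp Require Import all_boot.
Set Implicit Arguments. Unset Strict Implicit. Unset Printing Implicit Defensive.

Definition simple_graph (T : finType) (e : rel T) : Prop :=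
  symmetric e /\ irreflexive e.

(* A cycle: a duplicate-free closed walk x :: p of length >= 3. *)
Definition has_cycle (T : finType) (e : rel T) : Prop :=
  exists (x : T) (p : seq T),
    [/\ path e x p, uniq (x :: p), 2 <= size p & e (last x p) x].

Definition is_tree (T : finType) (e : rel T) : Prop :=
  [/\ simple_graph e, 0 < #|T|, (forall x y, connect e x y) & ~ has_cycle e].

Definition bipartite_with_parts (V : finType) (e : rel V) (X Y : {set V}) : Prop :=
  [/\ simple_graph e, X :&: Y = set0, X :|: Y = setT &
      forall x y, e x y -> (x \in X) && (y \in Y) || (x \in Y) && (y \in X)].

(* Copies of K_{2,2} in G: a subgraph isomorphic to K_{2,2} is determined by the
   unordered pair {A, B} of its two (disjoint) sides, each of size 2, with all
   edges between A and B present. *)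
Definition K22_copies (V : finType) (e : rel V) : {set {set {set V}}} :=
  [set P : {set {set V}} | [exists A : {set V}, exists B : {set V},
     [&& P == [set A; B], #|A| == 2, #|B| == 2, [disjoint A & B] &
         [forall a in A, forall b in B, e a b]]]].

(* A copy of the 2-blowup T[2] in G: an injective map from V(T) x bool
   (the two images of each vertex) into V(G) such that for each edge uw of T,
   all four pairs of images are adjacent in G. *)
Definition blowup2_embedding (T V : finType) (eT : rel T) (e : rel V)
    (f : T * bool -> V) : Prop :=
  injective f /\ forall u w i j, eT u w -> e (f (u, i)) (f (w, j)).

(* Main.v *)
Require Import Defs.
From mathcomp Require Import all_boot zify.
Set Implicit Arguments. Unset Strict Implicit. Unset Printing Implicit Defensive.

Lemma card_bigcup_le (I T : finType) (A : {pred I}) (F : I -> {set T}) :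
  #|\bigcup_(i in A) F i| <= \sum_(i in A) #|F i|.
Proof.
apply: (big_ind2 (fun (X : {set T}) n => #|X| <= n)); first by rewrite cards0.
move=> X1 n1 X2 n2 h1 h2; apply: leq_trans (leq_card_setU X1 X2) _.
exact: leq_add.
by [].
Qed.

Section Pairs.
Variables (V : finType) (e : rel V).
Hypothesis esym : symmetric e.
Hypothesis eirr : irreflexive e.

Definition N (P : {set V}) := [set y | [forall p in P, e p y]].
Definition adj (P Q : {set V}) :=
  [&& #|P| == 2, #|Q| == 2, [disjoint P & Q] & [forall p in P, forall q in Q, e p q]].
Definition deg (F : {set {set V}}) P := #|[set Q in F | adj P Q]|.
Definition EE (F : {set {set V}}) := \sum_(P in F) deg F P.

Lemma adj_sym P Q : adj P Q = adj Q P.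
Proof.
apply/idP/idP => /and4P[h1 h2 h3 /forallP h4]; apply/and4P; split => //;
  try by rewrite disjoint_sym.
all: apply/forallP => q; apply/implyP => hq; apply/forallP => p; apply/implyP => hp.
all: by rewrite esym; move: (h4 p) => /implyP /(_ hp) /forallP /(_ q) /implyP /(_ hq).
Qed.

Lemma adj_irr P : adj P P = false.
Proof.
apply/negP => /and4P[h1 _ h3 _].
move: h3; rewrite -setI_eq0 setIid => /eqP P0.
by move: h1; rewrite P0 cards0.
Qed.

Lemma EE_del (F : {set {set V}}) (P : {set V}) : P \in F -> EE F <= EE (F :\ P) + 2 * deg F P.
Proof.
move=> PF; rewrite /EE (big_setD1 P PF) /=.
have h1 : forall R, R \in F :\ P -> deg F R <= deg (F :\ P) R + (adj P R : nat).
  move=> R _; rewrite /deg.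
  case aPR: (adj P R) => /=.
    apply: leq_trans (_ : #|P |: [set Q in F :\ P | adj R Q]| <= _).
      apply: subset_leq_card; apply/subsetP => Q; rewrite !inE.
      by case: (Q =P P) => //= _ /andP[-> ->].
    by rewrite cardsU1 addnC leq_add2l leq_b1.
  rewrite addn0; apply: subset_leq_card; apply/subsetP => Q; rewrite !inE.
  case: (Q =P P) => [-> | //]; by rewrite adj_sym aPR andbF.
apply: leq_trans (_ : deg F P + \sum_(R in F :\ P) (deg (F :\ P) R + (adj P R : nat)) <= _).
  by rewrite leq_add2l; apply: leq_sum.
rewrite big_split /=.
have h2 : \sum_(R in F :\ P) (adj P R : nat) <= deg F P.
  rewrite -big_mkcondr /= sum1_card /deg; apply: subset_leq_card.
  by apply/subsetP => Q; rewrite unfold_in !inE => /andP[/andP[_ ->] ->].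
set a := \sum_(i in F :\ P) deg _ i. set b := \sum_(i in F :\ P) (adj P i : nat). move: h2; rewrite -/b. lia.
Qed.

Definition ww s P := s * #|N P| + 1.

Lemma peel s k (F : {set {set V}}) : #|F| = k ->
  2 * (\sum_(P in F) ww s P) < EE F ->
  exists G : {set {set V}}, G != set0 /\ forall P, P \in G -> ww s P <= deg G P.
Proof.
elim: k F => [|k IH] F hk hE.
  move: hk => /eqP; rewrite cards_eq0 => /eqP F0.
  by move: hE; rewrite F0 /EE !big_set0.
case: (boolP [forall P in F, ww s P <= deg F P]) => [/forall_inP h | /forall_inPn [P PF hP]].
  exists F; split; [by rewrite -card_gt0 hk | exact: h].
apply: (IH (F :\ P)).
  by move: hk; rewrite (cardsD1 P F) PF => [[]].
move: hE; rewrite (big_setD1 P PF) /=.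
have := EE_del PF; rewrite -ltnNge in hP. set a := \sum_(i in F :\ P) ww s i. move: (ww s P) hP a => x hP a. move: (EE F) (EE (F :\ P)) (deg F P) hP => E1 E2 dg hP h1 h2. lia.
Qed.

Definition F0 : {set {set V}} := [set P : {set V} | #|P| == 2].

Lemma deg_F0 (P : {set V}) : #|P| == 2 -> 'C(#|N P|, 2) <= deg F0 P.
Proof.
move=> hP; rewrite -cards_draws; apply: subset_leq_card; apply/subsetP => Q.
rewrite !inE => /andP[/subsetP hQ hQ2]; rewrite hQ2 /adj hP hQ2 /=.
apply/andP; split.
  rewrite -setI_eq0; apply/eqP/setP => x; rewrite !inE; apply/negP => /andP[xP xQ]; move: (hQ x xQ); rewrite inE => /forall_inP /(_ x xP).
  by rewrite eirr.
apply/forall_inP => p pP; apply/forall_inP => q qQ.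
by move: (hQ q qQ); rewrite inE => /forall_inP /(_ p pP).
Qed.

Lemma K22_le : #|K22_copies e| <= EE F0.
Proof.
apply: leq_trans (_ : #|\bigcup_(P in F0) [set [set P; Q] | Q in [set Q in F0 | adj P Q]]| <= _).
  apply: subset_leq_card; apply/subsetP => X.
  rewrite inE => /existsP[A /existsP[B /and5P[/eqP-> hA hB hd h]]].
  apply/bigcupP; exists A; first by rewrite inE.
  apply/imsetP; exists B => //.
  by rewrite !inE hB /adj hA hB hd h.
apply: leq_trans (card_bigcup_le _ _) _.
by apply: leq_sum => P _; apply: leq_imset_card.
Qed.

Lemma avoid s (G : {set {set V}}) (P : {set V}) (S : {set V}) :
  s * #|N P| + 1 <= deg G P -> #|S| <= s ->
  exists Q, [/\ Q \in G, adj P Q & [disjoint Q & S]].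
Proof.
move=> hd hS.
case: (boolP [exists Q in G, adj P Q && [disjoint Q & S]]).
  by move=> /exists_inP[Q QG /andP[h1 h2]]; exists Q.
move=> /exists_inPn hno; exfalso.
have sub : [set Q in G | adj P Q] \subset \bigcup_(z in S) [set [set z; y] | y in N P].
  apply/subsetP => Q; rewrite inE => /andP[QG aPQ].
  move: (hno Q QG); rewrite aPQ /= -setI_eq0 => /set0Pn[z]; rewrite inE => /andP[zQ zS].
  apply/bigcupP; exists z => //.
  move: (aPQ) => /and4P[_ /cards2P[q1 [q2 [q12 Qe]]] _ /forall_inP hall].
  have inN : forall q, q \in Q -> q \in N P.
    move=> q qQ; rewrite inE; apply/forall_inP => p pP.
    by move: (hall p pP) => /forall_inP /(_ q qQ).
  move: zQ; rewrite Qe !inE => /orP[/eqP zq | /eqP zq].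
    apply/imsetP; exists q2; first by apply: inN; rewrite Qe !inE eqxx orbT.
    by rewrite zq.
  apply/imsetP; exists q1; first by apply: inN; rewrite Qe !inE eqxx.
  by rewrite zq setUC.
have := subset_leq_card sub; rewrite -/(deg G P) => h1.
have h2 := card_bigcup_le (mem S) (fun z => [set [set z; y] | y in N P]).
have h3 : \sum_(z in S) #|[set [set z; y] | y in N P]| <= \sum_(z in S) #|N P|.
  by apply: leq_sum => z _; apply: leq_imset_card.
rewrite sum_nat_const in h3.
have h4 : #|S| * #|N P| <= s * #|N P| by apply: leq_mul.
move: (deg G P) hd h1 => dg hd h1.
move: (#|\bigcup_(z in S) _|) h1 h2 => c h1 h2.
move: (\sum_(z in S) _) h2 h3 => t h2 h3.
lia.
Qed.
End Pairs.

Section Tree.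
Variables (T : finType) (eT : rel T).

Lemma cross (A : {set T}) x y : connect eT x y -> x \in A -> y \notin A ->
  exists a b, [/\ a \in A, b \notin A & eT a b].
Proof.
move=> /connectP[p pth ->]; elim: p x pth => [|z p IH] x /= pth xA yA.
  by rewrite xA in yA.
move: pth => /andP[exz pth].
case zA: (z \in A); first exact: IH pth zA yA.
by exists x, z; rewrite zA.
Qed.

Definition restr (A : {set T}) := [rel x y | [&& x \in A, y \in A & eT x y]].

Lemma restr_path_in A x p : path (restr A) x p -> all (mem A) p.
Proof.
elim: p x => [|z p IH] x //= /andP[/and3P[_ zA _] pth].
by rewrite zA (IH z pth).
Qed.

Lemma uniq_nb (A : {set T}) w a b :
  simple_graph eT -> ~ has_cycle eT ->
  connect (restr A) a b -> w \notin A -> a \in A -> b \in A ->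
  eT w a -> eT w b -> a = b.
Proof.
move=> [sym irr] nocyc cab wA aA bA ewa ewb.
case: (a =P b) => // hneq; exfalso; apply: nocyc.
move: cab => /connectP[p pth pl].
move: pl; case: (shortenP pth) => p' pth' up' _ pl'.
have allA := restr_path_in pth'.
exists w, (a :: p'); split.
- rewrite /= ewa /=; apply: sub_path pth' => x y /and3P[_ _ ->] //.
- rewrite cons_uniq up' andbT; apply/negP; rewrite inE => /orP[/eqP wa | wp].
    by rewrite wa aA in wA.
  by move: allA => /allP /(_ w wp); rewrite inE (negbTE wA).
- case: p' {pth' up' allA} pl' => [|z p'] /= pl'; last by [].
  by exfalso; apply: hneq; rewrite pl'.
- by rewrite /= -pl' sym.
Qed.
End Tree.

Section Embed.
Variables (T : finType) (eT : rel T) (v : T).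
Hypothesis tree : is_tree eT.
Variables (V : finType) (e : rel V) (X : {set V}) (G : {set {set V}}).
Hypothesis esym : symmetric e.
Hypothesis hG : forall P, P \in G -> ww e (2 * #|T|) P <= deg e G P.

Definition inv_emb (A : {set T}) (f : T * bool -> V) :=
  [/\ v \in A, forall b, f (v, b) \in X,
      forall a, a \in A -> [set f (a, false); f (a, true)] \in G,
      ({in [set ub : T * bool | ub.1 \in A] &, injective f})
    & (forall a b i j, a \in A -> b \in A -> eT a b -> e (f (a, i)) (f (b, j))) /\
      (forall a b, a \in A -> b \in A -> connect (restr eT A) a b)].

Lemma step A f : inv_emb A f -> A != setT ->
  exists w f', w \notin A /\ inv_emb (w |: A) f'.
Proof.
case: tree => simp _ conn nocyc.
case: (simp) => symT irrT.
move=> [vA fvX fG finj [fedge fconn]] AT.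
have [w0 w0A] : exists w, w \notin A.
  apply/existsP; apply: contraNT AT => /existsPn hn; apply/eqP/setP => x.
  by rewrite inE; move: (hn x); rewrite negbK.
have [a [w [aA wA eaw]]] := cross (conn v w0) vA w0A.
set Pa := [set f (a, false); f (a, true)].
set S := f @: [set ub : T * bool | ub.1 \in A].
have hS : #|S| <= 2 * #|T|.
  apply: leq_trans (leq_imset_card _ _) _.
  by apply: leq_trans (max_card _) _; rewrite card_prod card_bool mulnC.
have [Q [QG aPQ dQS]] := avoid (hG (fG a aA)) hS.
move: (aPQ) => /and4P[_ /cards2P[q1 [q2 [q12 Qe]]] _ /forall_inP hall].
have eQ : forall i q, q \in Q -> e (f (a, i)) q.
  move=> i q qQ; have : f (a, i) \in Pa by case: i; rewrite !inE eqxx ?orbT.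
  by move=> /hall /forall_inP /(_ q qQ).
have q1Q : q1 \in Q by rewrite Qe !inE eqxx.
have q2Q : q2 \in Q by rewrite Qe !inE eqxx orbT.
have notS : forall q ub, q \in Q -> ub.1 \in A -> q != f ub.
  move=> q ub qQ ubA; apply/eqP => qf.
  have : q \in S by rewrite qf; apply: imset_f; rewrite inE.
  move=> qS; move: dQS; rewrite -setI_eq0 => /eqP /setP /(_ q).
  by rewrite in_setI qS qQ in_set0.
pose f' := fun ub : T * bool => if ub.1 == w then (if ub.2 then q2 else q1) else f ub.
have f'A : forall ub, ub.1 \in A -> f' ub = f ub.
  move=> ub ubA; rewrite /f'; case: eqP => // h; by move: ubA; rewrite h (negbTE wA).
have f'w : forall i, f' (w, i) \in Q.
  by move=> i; rewrite /f' eqxx; case: i.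
have nbw : forall b, b \in A -> eT w b -> b = a.
  move=> b bA ewb; apply: (uniq_nb simp nocyc (fconn b a bA aA) wA bA aA ewb).
  by rewrite symT.
exists w, f'; split => //; split.
- by rewrite inE vA orbT.
- by move=> b; rewrite f'A //.
- move=> x; rewrite !inE => /orP[/eqP -> | xA].
    by rewrite /f' eqxx /= -Qe.
  by rewrite (f'A (x, false)) ?(f'A (x, true)) //; apply: fG.
- move=> [x i] [y j]; rewrite !inE /= => /orP[/eqP xw | xA] /orP[/eqP yw | yA].
  + subst x y; rewrite /f' eqxx /=.
    by case: i; case: j => //= h; move: q12; rewrite h eqxx.
  + subst x; rewrite (f'A (y, j)) // => h.
    by move: (notS _ (y, j) (f'w i) yA); rewrite h eqxx.
  + subst y; rewrite (f'A (x, i)) // => h.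
    by move: (notS _ (x, i) (f'w j) xA); rewrite h eqxx.
  + by rewrite !f'A // => h; apply: finj; rewrite // inE.
- split.
 + move=> x y i j; rewrite !inE => /orP[/eqP xw | xA] /orP[/eqP yw | yA] exy.
  + by subst x y; rewrite irrT in exy.
  + subst x; have ya := nbw y yA exy; subst y.
    by rewrite (f'A (a, j)) // esym; apply: eQ.
  + subst y; rewrite symT in exy; have xa := nbw x xA exy; subst x.
    by rewrite (f'A (a, i)) //; apply: eQ.
  + by rewrite !f'A //; apply: fedge.
- have mono : forall x y, connect (restr eT A) x y -> connect (restr eT (w |: A)) x y.
    apply: connect_sub => x y /and3P[xA yA exy]; apply: connect1.
    by rewrite /= !inE xA yA exy !orbT.
  have toa : forall x, x \in w |: A -> connect (restr eT (w |: A)) x a.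
    move=> x; rewrite !inE => /orP[/eqP -> | xA]; last by apply: mono; apply: fconn.
    by apply: connect1; rewrite /= !inE eqxx aA orbT symT eaw.
  have froma : forall x, x \in w |: A -> connect (restr eT (w |: A)) a x.
    move=> x; rewrite !inE => /orP[/eqP -> | xA]; last by apply: mono; apply: fconn.
    by apply: connect1; rewrite /= !inE eqxx aA orbT eaw.
  move=> x y hx hy; exact: connect_trans (toa x hx) (froma y hy).
Qed.
End Embed.

Lemma iter_inv (T : finType) (eT : rel T) (v : T) (tr : is_tree eT)
  (V : finType) (e : rel V) (X : {set V}) (G : {set {set V}})
  (symE : symmetric e) (hG : forall P, P \in G -> ww e (2 * #|T|) P <= deg e G P) :
  forall k (A : {set T}) (f : T * bool -> V), #|~: A| = k -> inv_emb eT v e X G A f -> exists f', inv_emb eT v e X G setT f'.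
Proof.
elim=> [|k IH] A f hk hinv.
  have AT : A = setT.
    apply/setP => x; move: hk => /eqP; rewrite cards_eq0 => /eqP /setP /(_ x).
    by rewrite !inE => /negbFE ->.
  by subst A; exists f.
case: (boolP (A == setT)) => [/eqP AT | AT]; first by subst A; exists f.
have [w [f' [wA hinv']]] := step tr symE hG hinv AT.
apply: (IH _ _ _ hinv').
have h1 := cardsC A. have h2 := cardsC (w |: A). rewrite cardsU1 wA in h2.
move: (#|~: A|) hk h1 => x hk h1. move: (#|~: (w |: A)|) h2 => y h2. move: (#|A|) h1 h2 => z h1 h2.
simpl in h2. have h3 := etrans h2 (esym h1). clear h1 h2. lia.
Qed.

Lemma bin2_double k : 2 * 'C(k, 2) = k * k.-1.
Proof.
elim: k => [|k IH] //; rewrite binS bin1.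
case: k IH => [|k] //= IH. rewrite mulnDr IH. lia.
Qed.

Lemma side (V : finType) (e : rel V) (X Y : {set V}) :
  bipartite_with_parts e X Y -> forall x y, e x y -> (x \in X) = (y \notin X).
Proof.
move=> [_ XY0 XYT bip] x y exy.
have disj : forall z, z \in X -> z \in Y -> False.
  by move=> z zX zY; move: XY0 => /setP /(_ z); rewrite !inE zX zY.
case/orP: (bip x y exy) => /andP[h1 h2].
  rewrite h1; apply/esym/negP => yX; exact: disj y yX h2.
case xX: (x \in X); first by exfalso; exact: disj x xX h1.
by rewrite h2.
Qed.

Theorem mainTheorem7 (T : finType) (eT : rel T) (v : T) :
  is_tree eT ->
  exists C : nat,
    forall (n : nat) (V : finType) (e : rel V) (X Y : {set V}),
      0 < n ->
      bipartite_with_parts e X Y ->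
      #|X| <= n -> #|Y| <= n ->
      C * n ^ 2 <= #|K22_copies e| ->
      exists f : T * bool -> V,
        blowup2_embedding eT e f /\ f (v, false) \in X /\ f (v, true) \in X.
Proof.
move=> tr.
set s := 2 * #|T|.
set c := 4 + 4 * s * (8 * s + 1).
exists (2 * c + 1).
move=> n V e X Y n0 bp hX hY hK.
have sd := side bp.
case: (bp) => [[symE eirr] XY0 XYT bip].
have hV : #|V| <= 2 * n.
  rewrite -cardsT -XYT; apply: leq_trans (leq_card_setU X Y) _. lia.
have hF0 : #|F0 V| <= 2 * n ^ 2.
  rewrite /F0 card_draws.
  have := leq_bin2l 2 hV. have := bin2_double (2 * n). lia.
have hP : forall P, P \in F0 V -> 4 * ww e s P <= c + deg e (F0 V) P.
  move=> P; rewrite inE => P2.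
  have h1 := deg_F0 eirr P2. have h2 := bin2_double #|N e P|.
  rewrite /ww /c. move: (deg e (F0 V) P) (#|N e P|) h1 h2 => D d h1 h2.
  case: (leqP d (8 * s + 1)) => hd.
    have : s * d <= s * (8 * s + 1) by apply: leq_mul.
    lia.
  have : d * (8 * s + 1) <= d * d.-1 by apply: leq_mul => //; lia.
  nia.
have hsum : 4 * (\sum_(P in F0 V) ww e s P) <= c * #|F0 V| + EE e (F0 V).
  apply: leq_trans (_ : \sum_(P in F0 V) (c + deg e (F0 V) P) <= _).
    by rewrite big_distrr; apply: leq_sum => P PF; exact: hP P PF.
  by rewrite big_split /= sum_nat_const mulnC.
have hEE := K22_le e.
have [G [G0 hG]] : exists G : {set {set V}}, G != set0 /\
    forall P, P \in G -> ww e s P <= deg e G P.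
  apply: (peel symE (erefl #|F0 V|)).
  have hc : c * #|F0 V| <= c * (2 * n ^ 2) by apply: leq_mul.
  have hn : 1 <= n ^ 2 by rewrite expn_gt0 n0.
  move: (\sum_(P in F0 V) ww e s P) hsum => S hsum.
  move: (EE e (F0 V)) hsum hEE => E hsum hEE.
  move: (c * #|F0 V|) hsum hc => cF hsum hc.
  move: (#|K22_copies e|) hK hEE => K hK hEE.
  move: (n ^ 2) hK hc hn => m hK hc hn.
  rewrite mulnCA in hc; rewrite mulnDl mul1n -mulnA in hK.
  move: (c * m) hK hc => cm hK hc.
  lia.
have [x1 [x2 [x12 PG [x1X x2X]]]] : exists x1 x2, [/\ x1 != x2, [set x1; x2] \in G &
    x1 \in X /\ x2 \in X].
  case/set0Pn: G0 => P0 P0G.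
  have : 0 < deg e G P0 by apply: leq_trans (hG _ P0G); rewrite /ww addn1.
  rewrite card_gt0 => /set0Pn[Q0]; rewrite inE => /andP[Q0G aPQ].
  move: aPQ => /and4P[/cards2P[p1 [p2 [p12 Pe]]] /cards2P[q1 [q2 [q12 Qe]]] _ /forall_inP hall].
  have eE : forall p q, p \in P0 -> q \in Q0 -> e p q.
    by move=> p q pP qQ; move: (hall p pP) => /forall_inP /(_ q qQ).
  have p1P : p1 \in P0 by rewrite Pe !inE eqxx.
  have p2P : p2 \in P0 by rewrite Pe !inE eqxx orbT.
  have q1Q : q1 \in Q0 by rewrite Qe !inE eqxx.
  have q2Q : q2 \in Q0 by rewrite Qe !inE eqxx orbT.
  case p1X: (p1 \in X).
    exists p1, p2; split => //; first by rewrite -Pe.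
    split => //.
    have := sd _ _ (eE _ _ p1P q1Q); rewrite p1X => /esym q1X.
    by rewrite (sd _ _ (eE _ _ p2P q1Q)) q1X.
  have := sd _ _ (eE _ _ p1P q1Q); rewrite p1X => /esym /negbFE q1X.
  have := sd _ _ (eE _ _ p1P q2Q); rewrite p1X => /esym /negbFE q2X.
  by exists q1, q2; split => //; rewrite -Qe.
pose f0 := fun ub : T * bool => if ub.2 then x2 else x1.
have inv0 : inv_emb eT v e X G [set v] f0.
  split.
  - by rewrite inE.
  - by case.
  - by move=> a _.
  - move=> [a i] [b j]; rewrite !inE /= => /eqP -> /eqP ->.
    rewrite /f0 /=; case: i; case: j => //= h; by move: x12; rewrite h eqxx.
  - split.
    + move=> a b i j; rewrite !inE => /eqP -> /eqP ->.
      by case: tr => [[_ irrT] _ _ _]; rewrite irrT.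
    + by move=> a b; rewrite !inE => /eqP -> /eqP ->; apply: connect0.
have [f [_ fX _ finj [fedge _]]] := iter_inv tr symE hG (erefl _) inv0.
exists f; split; last by rewrite !fX.
split.
  by move=> x y h; apply: finj; rewrite // inE in_setT.
by move=> u w i j euw; apply: fedge; rewrite ?in_setT.
Qed.
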